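(* Let $S$ be an ordered forest and $I$ a finite linear order. Then $S\otimes I$ with the relation $\sqsubseteq_{S\otimes I}$ is a forest, and, taken additionally with the linear order $\leq_{S\otimes I}$, it is an ordered forest.
   Context: A forest is a finite poset in which the set of predecessors of each element is linearly ordered (each element its own predecessor); $1\oplus T$ denotes the tree obtained by adding a new smallest element. An ordered tree has a linear order on the immediate successors of each node, inducing the lexicographic order ($v\leq w$ if $v\sqsubseteq w$; for incomparable $v,w$ compare the immediate successors of $v\wedge w$ below $v$ and $w$). An ordered forest is a forest $T$ with a linear order $\leq_T$ that is the restriction of the lexicographic order of some ordered-tree structure on $1\oplus T$. For $s$ in a forest $S$, ${\rm ht}(s)$ is the number of predecessors of $s$ (including $s$), ${\rm ht}(S)=\max_s{\rm ht}(s)$, and for $i<{\rm ht}(s)$, $s(i)$ is the predecessor of $s$ of height $i+1$. Let $n={\rm ht}(S)$ and $S\otimes I=\{(s,t)\in S\times I^{\leq n}\mid {\rm ht}(s)=|t|\}$, where $I^{\le n}$ are sequences $t=(t(0),\dots,t(|t|-1))$ in $I$ of length at most $n$. Set $(s_1,t_1)\sqsubseteq_{S\otimes I}(s_2,t_2)$ iff $s_1\sqsubseteq_S s_2$, $t_1\upharpoonright({\rm ht}(s_1)-1)=t_2\upharpoonright({\rm ht}(s_1)-1)$, and $t_1({\rm ht}(s_1)-1)\leq_I t_2({\rm ht}(s_1)-1)$. Set $(s_1,t_1)\leq_{S\otimes I}(s_2,t_2)$ iff the sequence $(s_1(0),t_1(0),\dots,s_1(h_1-1),t_1(h_1-1))$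 is lexicographically at most $(s_2(0),t_2(0),\dots,s_2(h_2-1),t_2(h_2-1))$, where $h_k={\rm ht}(s_k)$ and lexicographic comparison uses $\leq_S$ and $\leq_I$. *)

(* Defs.v *)
From mathcomp Require Import all_boot all_order.
Set Implicit Arguments. Unset Strict Implicit. Unset Printing Implicit Defensive.
Import Order.TTheory.

Definition is_porder (T : finType) (r : rel T) : Prop :=
  [/\ reflexive r, antisymmetric r & transitive r].

Definition is_linorder (T : finType) (r : rel T) : Prop :=
  is_porder r /\ total r.

Definition is_forest (T : finType) (sq : rel T) : Prop :=
  is_porder sq /\
  forall x y z, sq y x -> sq z x -> sq y z || sq z y.

Definition oplus1 (T : finType) (sq : rel T) : rel (option T) :=
  fun v w => match v, w with
             | None, _ => true
             | Some _, None => false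
             | Some x, Some y => sq x y
             end.

Definition imm_succ (T : finType) (sq : rel T) (u c : T) : bool :=
  [&& sq u c, u != c &
      ~~ [exists v, [&& sq u v, sq v c, v != u & v != c]]].

Definition ordered_tree_structure (T : finType) (sq : rel T) (sib : rel T)
  : Prop :=
  forall u,
   [/\ forall a, imm_succ sq u a -> sib a a,
       forall a b, imm_succ sq u a -> imm_succ sq u b ->
          sib a b -> sib b a -> a = b,
       forall a b c, imm_succ sq u a -> imm_succ sq u b -> imm_succ sq u c ->
          sib a b -> sib b c -> sib a c &
       forall a b, imm_succ sq u a -> imm_succ sq u b -> sib a b || sib b a].

(* Lexicographic order induced by an ordered-tree structure: v <= w if
   v is below w, or, for v,w incomparable, the immediate successors a,b of
   the meet u = v /\ w lying below v and w respectively satisfy a < b.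
   (The meet is characterised as the node u having two distinct immediate
   successors a below v and b below w.) *)
Definition lex_le (T : finType) (sq : rel T) (sib : rel T) : rel T :=
  fun v w => sq v w ||
    [exists u, exists a, exists b,
       [&& imm_succ sq u a, imm_succ sq u b, a != b,
           sq a v, sq b w & sib a b]].

Definition ordered_forest (T : finType) (sq : rel T) (le : rel T) : Prop :=
  [/\ is_forest sq, is_linorder le &
      exists sib : rel (option T),
        ordered_tree_structure (oplus1 sq) sib /\
        forall x y, le x y = lex_le (oplus1 sq) sib (Some x) (Some y)].

Definition ht (T : finType) (sq : rel T) (s : T) : nat := #|[set y | sq y s]|.

(* s(i): the predecessor of s of height i+1 (meaningful for i < ht s). *)
Definition pred_at (T : finType) (sq : rel T) (s : T) (i : nat) : T :=
  odflt s [pick y | sq y s && (ht sq y == i.+1)].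

Definition tensor (S : finType) (sq : rel S) (I : finType) : finType :=
  {s : S & (ht sq s).-tuple I}.

Section Tensor.
Variables (S : finType) (sqS leS : rel S) (d : Order.disp_t) (I : finOrderType d).

Local Notation ST := (tensor sqS I).

Definition tsq : rel ST := fun x y =>
  let: h1 := ht sqS (tag x) in
  [&& sqS (tag x) (tag y),
      take h1.-1 (tagged x) == take h1.-1 (tagged y) &
      match onth (tagged x) h1.-1, onth (tagged y) h1.-1 with
      | Some a, Some b => (a <= b)%O
      | _, _ => false
      end].

Fixpoint seqlex (X : eqType) (r : rel X) (s1 s2 : seq X) : bool :=
  match s1, s2 with
  | [::], _ => true
  | _ :: _, [::] => false
  | x :: s1', y :: s2' => if x == y then seqlex r s1' s2' else r x y
  end.

Definition sumle : rel (S + I) := fun u v =>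
  match u, v with
  | inl a, inl b => leS a b
  | inr a, inr b => (a <= b)%O
  | _, _ => false
  end.

Definition interleave (x : ST) : seq (S + I) :=
  flatten [seq [:: inl (pred_at sqS (tag x) p.1); inr p.2]
          | p <- zip (iota 0 (ht sqS (tag x))) (tagged x : seq I)].

Definition tle : rel ST := fun x y => seqlex sumle (interleave x) (interleave y).

End Tensor.

(* Main.v *)
Require Import Defs.
From mathcomp Require Import all_boot all_order zify.
Set Implicit Arguments. Unset Strict Implicit. Unset Printing Implicit Defensive.
Import Order.TTheory.


Lemma porder_strict (T : finType) (sq : rel T) : is_porder sq ->
  forall v w, sq v w -> v != w -> #|[set z | sq z v]| < #|[set z | sq z w]|.
Proof.
case=> Hr Ha Ht v w Hvw Hne; apply: proper_card; apply/properP; split.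
  by apply/subsetP=> z; rewrite !inE => Hz; apply: Ht Hvw.
exists w; rewrite !inE ?Hr //; apply/negP=> Hwv.
by move/eqP: Hne; apply; apply: Ha; rewrite Hvw Hwv.
Qed.

Lemma porder_le (T : finType) (sq : rel T) : is_porder sq ->
  forall v w, sq v w -> #|[set z | sq z v]| <= #|[set z | sq z w]|.
Proof.
case=> Hr Ha Ht v w Hvw; apply: subset_leq_card.
by apply/subsetP=> z; rewrite !inE => Hz; apply: Ht Hvw.
Qed.

Lemma G1 (T : finType) (sq : rel T) : is_porder sq ->
  forall u x, sq u x -> u != x -> exists a, imm_succ sq u a && sq a x.
Proof.
move=> Hp; have [Hr Ha Ht] := Hp; move=> u x Hux Hne.
pose P v := [&& sq u v, sq v x & v != u].
have Px : P x by rewrite /P Hux Hr eq_sym.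
case: (arg_minnP (fun v => #|[set z | sq z v]|) Px) => a /and3P[Hua Hax Hau] Hmin.
exists a; rewrite Hax andbT /imm_succ Hua eq_sym Hau /=.
apply/existsP=> [[v /and4P[Huv Hva Hvu Hvna]]].
have := porder_strict Hp Hva Hvna; rewrite ltnNge Hmin //.
by rewrite /P Huv Hvu (Ht _ _ _ Hva Hax).
Qed.

Lemma G2 (T : finType) (sq : rel T) : is_porder sq ->
  forall z0 x y, sq z0 x -> sq z0 y -> ~~ sq x y -> ~~ sq y x ->
  exists u a b, [&& imm_succ sq u a, imm_succ sq u b, a != b, sq a x & sq b y].
Proof.
move=> Hp; have [Hr Ha Ht] := Hp; move=> z0 x y H0x H0y Nxy Nyx.
pose P u := sq u x && sq u y.
have P0 : P z0 by rewrite /P H0x.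
case: (arg_maxnP (fun v => #|[set z | sq z v]|) P0) => u /andP[Hux Huy] Hmax.
have Hnx : u != x by apply/eqP=> E; subst u; rewrite Huy in Nxy.
have Hny : u != y by apply/eqP=> E; subst u; rewrite Hux in Nyx.
have [a /andP[Ia Hax]] := G1 Hp Hux Hnx.
have [b /andP[Ib Hby]] := G1 Hp Huy Hny.
exists u, a, b; rewrite Ia Ib Hax Hby /= andbT.
apply/eqP=> E; subst b.
move: Ia => /and3P[Hua Hna _].
have := porder_strict Hp Hua Hna; rewrite ltnNge; move/negP; apply.
by apply: Hmax; rewrite /P Hax Hby.
Qed.

Lemma oplus1_porder (T : finType) (sq : rel T) : is_porder sq -> is_porder (oplus1 sq).
Proof.
case=> Hr Ha Ht; split.
- by case=> //= x; apply: Hr.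
- by case=> [x|] [y|] //= /andP[H1 H2]; congr Some; apply: Ha; rewrite H1 H2.
- by case=> [x|] [y|] [z|] //=; apply: Ht.
Qed.

Lemma ht_gt0 (S : finType) (sq : rel S) : reflexive sq -> forall s, 0 < ht sq s.
Proof. by move=> Hr s; apply/card_gt0P; exists s; rewrite inE Hr. Qed.

Lemma ht_le (S : finType) (sq : rel S) : is_porder sq -> forall y s, sq y s -> ht sq y <= ht sq s.
Proof. exact: porder_le. Qed.

Lemma ht_lt (S : finType) (sq : rel S) : is_porder sq -> forall y s, sq y s -> y != s -> ht sq y < ht sq s.
Proof. exact: porder_strict. Qed.

Lemma ht_eq (S : finType) (sq : rel S) : is_porder sq -> forall y s, sq y s -> ht sq y = ht sq s -> y = s.
Proof.
move=> Hp y s Hys E; apply/eqP; apply/negPn/negP=> Hne.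
by have := ht_lt Hp Hys Hne; rewrite E ltnn.
Qed.

Lemma ht_exists (S : finType) (sq : rel S) : is_forest sq ->
  forall s i, i < ht sq s -> exists z, sq z s && (ht sq z == i.+1).
Proof.
move=> [Hp Hf] s i Hi; have [Hr Ha Ht] := Hp.
pose l := [seq ht sq z | z <- enum [set z | sq z s]].
have Hu : uniq l.
  have Hinj : {in enum [set z | sq z s] &, injective (ht sq)}.
    move=> z1 z2; rewrite !mem_enum !inE => H1 H2 E.
    case/orP: (Hf _ _ _ H1 H2) => H.
      exact: (ht_eq Hp H E).
    exact: (esym (ht_eq Hp H (esym E))).
  by rewrite (map_inj_in_uniq Hinj) enum_uniq.
have Hs : {subset l <= iota 1 (ht sq s)}.
  move=> k /mapP[z]; rewrite mem_enum inE => Hz ->.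
  by rewrite mem_iota ht_gt0 //= add1n ltnS ht_le.
have Hsz : size (iota 1 (ht sq s)) <= size l by rewrite size_iota size_map -cardE.
have [_ E] := uniq_min_size Hu Hs Hsz.
have : i.+1 \in l by rewrite E mem_iota add1n ltnS.
by case/mapP=> z; rewrite mem_enum inE => Hz ->; exists z; rewrite Hz eqxx.
Qed.

Lemma pred_at_sq (S : finType) (sq : rel S) : reflexive sq -> forall s i, sq (pred_at sq s i) s.
Proof.
move=> Hr s i; rewrite /pred_at; case: pickP => [z /andP[]|] //= _; exact: Hr.
Qed.

Lemma pred_at_ht (S : finType) (sq : rel S) : is_forest sq ->
  forall s i, i < ht sq s -> ht sq (pred_at sq s i) = i.+1.
Proof.
move=> Hf s i Hi; rewrite /pred_at; case: pickP => [z /andP[_ /eqP]|] //= H.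
by have [z /andP[Hz Ht]] := ht_exists Hf Hi; move: (H z); rewrite Hz Ht.
Qed.

Lemma pred_at_last (S : finType) (sq : rel S) : is_forest sq ->
  forall s, pred_at sq s (ht sq s).-1 = s.
Proof.
move=> [Hp Hf] s; rewrite /pred_at; case: pickP => [z /andP[Hz /eqP E]|] //=.
apply: (ht_eq Hp Hz); rewrite E prednK //; apply: ht_gt0; by case: Hp.
Qed.

Lemma pred_at_eq (S : finType) (sq : rel S) : is_forest sq ->
  forall s s' i, sq s s' -> i < ht sq s -> pred_at sq s' i = pred_at sq s i.
Proof.
move=> Hf s s' i Hss Hi; have [Hp Hfo] := Hf; have [Hr Ha Ht] := Hp.
have Hi' : i < ht sq s' by apply: leq_trans Hi (ht_le Hp Hss).
have H1 := pred_at_sq Hr s' i; have H2 := pred_at_sq Hr s i.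
have E1 := pred_at_ht Hf Hi'; have E2 := pred_at_ht Hf Hi.
have H2' := Ht _ _ _ H2 Hss.
case/orP: (Hfo _ _ _ H1 H2') => H.
  by apply: (ht_eq Hp H); rewrite E1 E2.
by apply/esym; apply: (ht_eq Hp H); rewrite E1 E2.
Qed.

Definition pth (S : finType) (sq : rel S) (s : S) : seq S :=
  map (pred_at sq s) (iota 0 (ht sq s)).

Lemma size_pth (S : finType) (sq : rel S) s : size (pth sq s) = ht sq s.
Proof. by rewrite size_map size_iota. Qed.

Lemma pth_last (S : finType) (sq : rel S) : is_forest sq ->
  forall s x0, nth x0 (pth sq s) (ht sq s).-1 = s.
Proof.
move=> Hf s x0; have [[Hr _ _] _] := Hf.
rewrite (nth_map 0) ?size_iota ?prednK ?ht_gt0 ?ltnSn //.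
by rewrite nth_iota ?add0n ?prednK ?ht_gt0 ?ltnSn // pred_at_last.
Qed.

Lemma pth_take (S : finType) (sq : rel S) : is_forest sq ->
  forall s s', sq s s' -> take (ht sq s) (pth sq s') = pth sq s.
Proof.
move=> Hf s s' Hss; have [Hp _] := Hf.
rewrite /pth -map_take take_iota (minn_idPl (ht_le Hp Hss)).
by apply/eq_in_map => i; rewrite mem_iota add0n => Hi; apply: pred_at_eq.
Qed.

Lemma seqlex_refl (X : eqType) (r : rel X) s : seqlex r s s.
Proof. by elim: s => //= x s IH; rewrite eqxx. Qed.

Lemma seqlex_anti (X : eqType) (r : rel X) : antisymmetric r ->
  forall s1 s2, seqlex r s1 s2 -> seqlex r s2 s1 -> s1 = s2.
Proof.
move=> Ha; elim=> [|x s1 IH] [|y s2] //=.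
case: (eqVneq x y) => [<-|Hne].
  by move=> H1 H2; rewrite (IH _ H1 H2).
move=> H1 H2.
by case/eqP: Hne; apply: Ha; rewrite H1 H2.
Qed.

Lemma seqlex_trans (X : eqType) (r : rel X) : antisymmetric r -> transitive r ->
  transitive (seqlex r).
Proof.
move=> Ha Ht s2 s1 s3; elim: s1 s2 s3 => [|x s1 IH] [|y s2] [|z s3] //=.
case: (eqVneq x y) => [<-|Hxy].
  case: (eqVneq x z) => [_|Hxz]; first by apply: IH.
  by [].
move=> H1.
case: (eqVneq y z) => [<-|Hyz]; first by rewrite (negbTE Hxy).
move=> H2; case: (eqVneq x z) => [E|Hxz]; last exact: Ht H1 H2.
subst z; case/eqP: Hxy; apply: Ha; rewrite H1 H2 //.
Qed.

Lemma seqlex_cat (X : eqType) (r : rel X) p u v :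
  seqlex r (p ++ u) (p ++ v) = seqlex r u v.
Proof. by elim: p => //= x p IH; rewrite eqxx. Qed.

Lemma seqlex_mid (X : eqType) (r : rel X) : antisymmetric r ->
  forall q u w1 v w2 y, seqlex r (q ++ u :: w1) y -> seqlex r y (q ++ v :: w2) ->
  exists c w, y = q ++ c :: w /\ seqlex r (u :: w1) (c :: w).
Proof.
move=> Ha; elim=> [|x q IH] u w1 v w2 [|c y] //=.
  by move=> H _; exists c, y.
case: (eqVneq x c) => [<-|Hxc].
  move=> H1 H2; have [c' [w [E Hl]]] := IH _ _ _ _ _ H1 H2.
  by exists c', w; rewrite E.
move=> H1 H2.
by case/eqP: Hxc; apply: Ha; rewrite H1 H2.
Qed.

Definition il (S I : eqType) (ss : seq S) (ts : seq I) : seq (S + I) :=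
  flatten [seq [:: inl p.1; inr p.2] | p <- zip ss ts].

Lemma il_cons (S I : eqType) s ss (t : I) ts :
  il (s :: ss) (t :: ts) = inl s :: inr t :: il (S:=S) ss ts.
Proof. by []. Qed.

Lemma il_cat (S I : eqType) (ss1 ss2 : seq S) (ts1 ts2 : seq I) :
  size ss1 = size ts1 -> il (ss1 ++ ss2) (ts1 ++ ts2) = il ss1 ts1 ++ il ss2 ts2.
Proof.
elim: ss1 ts1 => [|s ss1 IH] [|t ts1] //= [E].
by rewrite !il_cons IH.
Qed.

Lemma il_map (S0 S I : eqType) (f : S0 -> S) (a : seq S0) (b : seq I) :
  flatten [seq [:: inl (f p.1); inr p.2] | p <- zip a b] = il (map f a) b.
Proof. by elim: a b => [|x a IH] [|y b] //=; rewrite IH. Qed.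

Definition lefts (S I : Type) (l : seq (S + I)) : seq S :=
  pmap (fun e => if e is inl a then Some a else None) l.
Definition rights (S I : Type) (l : seq (S + I)) : seq I :=
  pmap (fun e => if e is inr a then Some a else None) l.

Lemma lefts_il (S I : eqType) (ss : seq S) (ts : seq I) :
  size ss = size ts -> lefts (il ss ts) = ss.
Proof. by elim: ss ts => [|s ss IH] [|t ts] //= [E]; rewrite /lefts /= -/(lefts _) IH. Qed.

Lemma rights_il (S I : eqType) (ss : seq S) (ts : seq I) :
  size ss = size ts -> rights (il ss ts) = ts.
Proof. by elim: ss ts => [|s ss IH] [|t ts] //= [E]; rewrite /rights /= -/(rights _) IH. Qed.

Lemma lefts_cat (S I : Type) (a b : seq (S + I)) : lefts (a ++ b) = lefts a ++ lefts b.
Proof. exact: pmap_cat. Qed.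
Lemma rights_cat (S I : Type) (a b : seq (S + I)) : rights (a ++ b) = rights a ++ rights b.
Proof. exact: pmap_cat. Qed.

Lemma il_total (S I : eqType) (r : rel (S + I)) :
  (forall a b : S, r (inl a) (inl b) || r (inl b) (inl a)) ->
  (forall a b : I, r (inr a) (inr b) || r (inr b) (inr a)) ->
  forall (ss1 ss2 : seq S) (ts1 ts2 : seq I),
  size ss1 = size ts1 -> size ss2 = size ts2 ->
  seqlex r (il ss1 ts1) (il ss2 ts2) || seqlex r (il ss2 ts2) (il ss1 ts1).
Proof.
move=> HL HR; elim=> [|s1 ss1 IH] [|s2 ss2] [|t1 ts1] [|t2 ts2] //=; try by rewrite orbT.
move=> [E1] [E2] /=; rewrite -/(il ss1 ts1) -/(il ss2 ts2).
case: (eqVneq (inl s1 : S + I) (inl s2)) => [_|Hs]; last exact: HL.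
case: (eqVneq (inr t1 : S + I) (inr t2)) => [_|Ht]; last exact: HR.
exact: IH.
Qed.

Lemma onth_some (T : Type) (x0 : T) s i : i < size s -> onth s i = Some (nth x0 s i).
Proof. by elim: s i => [|x s IH] [|i] //= Hi; apply: IH. Qed.

Lemma take_eqP (T : Type) (x0 : T) n (a b : seq T) : n <= size a -> n <= size b ->
  take n a = take n b <-> (forall i, i < n -> nth x0 a i = nth x0 b i).
Proof.
move=> Ha Hb; split=> [E i Hi|H].
  by rewrite -(nth_take x0 Hi a) E nth_take.
apply: (eq_from_nth (x0 := x0)); rewrite ?size_takel // => i Hi.
by rewrite !nth_take // H.
Qed.

Lemma split_mid (T : Type) (x0 : T) n s : n < size s -> s = take n s ++ nth x0 s n :: drop n.+1 s.
Proof. by move=> H; rewrite -(drop_nth x0 H) cat_take_drop. Qed.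

Lemma split_last (T : Type) (x0 : T) n s : size s = n.+1 -> s = take n s ++ [:: nth x0 s n].
Proof.
move=> E; rewrite {1}(split_mid x0 (n:=n) (s:=s)) ?E // drop_oversize ?E //.
Qed.

Lemma tsqE (S : finType) (sqS : rel S) d (I : finOrderType d) :
  is_porder sqS -> forall (x0 : I) (x y : tensor sqS I),
  tsq x y <-> [/\ sqS (tag x) (tag y),
     (forall i, i < (ht sqS (tag x)).-1 -> nth x0 (tagged x) i = nth x0 (tagged y) i) &
     (nth x0 (tagged x) (ht sqS (tag x)).-1 <= nth x0 (tagged y) (ht sqS (tag x)).-1)%O].
Proof.
move=> Hp x0 [s t] [s' t'] /=; have [Hr _ _] := Hp; rewrite /tsq /=.
case Hs: (sqS s s'); last by split=> //; case.
have Hle := ht_le Hp Hs; have H0 := ht_gt0 Hr s.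
have Hlt : (ht sqS s).-1 < ht sqS s by rewrite prednK.
rewrite (onth_some x0) ?size_tuple // (onth_some x0) ?size_tuple; last exact: leq_trans Hlt Hle.
rewrite /=; split.
  case/andP=> /eqP /(take_eqP x0) H1 H2; split=> //; apply: H1; rewrite size_tuple ?leq_pred //.
  exact: leq_trans (leq_pred _) Hle.
case=> _ H1 H2; rewrite H2 andbT; apply/eqP/(take_eqP x0) => //; rewrite size_tuple ?leq_pred //.
exact: leq_trans (leq_pred _) Hle.
Qed.

Lemma interleaveE (S : finType) (sqS : rel S) d (I : finOrderType d) (x : tensor sqS I) :
  interleave x = il (pth sqS (tag x)) (tagged x).
Proof. by rewrite /interleave il_map. Qed.

Lemma tsq_decomp (S : finType) (sqS : rel S) d (I : finOrderType d) :
  is_forest sqS -> forall (x y : tensor sqS I), tsq x y ->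
  exists P a b R, [/\ interleave x = P ++ [:: inl (tag x); inr a],
                     interleave y = P ++ inl (tag x) :: inr b :: R & (a <= b)%O].
Proof.
move=> Hf x y; have [Hp _] := Hf; have [Hr _ _] := Hp.
case: (x) => s t; case: (y) => s' t' /=.
have H0 := ht_gt0 Hr s.
have x0 : I := tnth t (Ordinal H0).
case/(tsqE Hp x0) => /= Hs Heq Hle.
have Hhle := ht_le Hp Hs.
set h := ht sqS s in H0 Heq Hle Hhle.
have Hlt : h.-1 < h by rewrite prednK.
pose A := take h.-1 (pth sqS s); pose B := take h.-1 (t : seq I).
have HA : size A = h.-1 by rewrite size_takel // size_pth leq_pred.
have HB : size B = h.-1 by rewrite size_takel // size_tuple leq_pred.
have Epx : pth sqS s = A ++ [:: s].
  rewrite {1}(@split_last _ s h.-1 (pth sqS s)) ?pth_last //.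
  by rewrite size_pth prednK.
have Etx : (t : seq I) = B ++ [:: nth x0 t h.-1].
  rewrite {1}(@split_last _ x0 h.-1 t) //.
  by rewrite size_tuple prednK.
have Epy : pth sqS s' = A ++ s :: drop h (pth sqS s').
  by rewrite -{1}(cat_take_drop h (pth sqS s')) pth_take // Epx -catA.
have Hlt' : h.-1 < size (t' : seq I) by rewrite size_tuple; exact: leq_trans Hlt Hhle.
have Ety : (t' : seq I) = B ++ nth x0 t' h.-1 :: drop h.-1.+1 t'.
  rewrite {1}(split_mid x0 Hlt'); congr (_ ++ _).
  apply/esym/(take_eqP x0); [by rewrite size_tuple leq_pred | exact: ltnW | exact: Heq].
set a := nth x0 t h.-1 in Etx Hle *; set b := nth x0 t' h.-1 in Ety Hle *.
set R1 := drop h (pth sqS s') in Epy *; set R2 := drop h.-1.+1 _ in Ety *.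
exists (il A B), a, b, (il R1 R2).
rewrite !interleaveE /= Epx Etx Epy Ety !il_cat ?HA ?HB //.
Qed.

Lemma tsq_tle (S : finType) (sqS leS : rel S) d (I : finOrderType d) :
  is_forest sqS -> forall (x y : tensor sqS I), tsq x y -> tle leS x y.
Proof.
move=> Hf x y H; have [P [a [b [R [Ex Ey Hab]]]]] := tsq_decomp Hf H.
rewrite /tle Ex Ey seqlex_cat /= eqxx.
by case: eqP.
Qed.

Lemma sumle_anti (S : finType) (leS : rel S) d (I : finOrderType d) :
  antisymmetric leS -> antisymmetric (sumle leS (I:=I)).
Proof.
move=> Ha [a|a] [b|b] //= H; first by rewrite (Ha _ _ H).
by rewrite (le_anti H).
Qed.

Lemma sumle_trans (S : finType) (leS : rel S) d (I : finOrderType d) :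
  transitive leS -> transitive (sumle leS (I:=I)).
Proof.
move=> Ht [b|b] [a|a] [c|c] //=; first exact: Ht.
exact: le_trans.
Qed.

Lemma tsq_convex (S : finType) (sqS leS : rel S) d (I : finOrderType d) :
  is_forest sqS -> antisymmetric leS -> forall (a x y : tensor sqS I),
  tsq a x -> tle leS a y -> tle leS y x -> tsq a y.
Proof.
move=> Hf Ha a x y H H1 H2; have [Hp _] := Hf; have [Hr _ _] := Hp.
have [P [ca [cx [R [Ea Ex Hc]]]]] := tsq_decomp Hf H.
move: H1 H2; rewrite /tle Ea Ex.
rewrite -[P ++ [:: _; _]]/(P ++ [:: inl (tag a)] ++ [:: inr ca]).
rewrite -[P ++ inl _ :: inr cx :: R]/(P ++ [:: inl (tag a)] ++ inr cx :: R) !catA.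
move=> H1 H2.
have [c [w [Ey Hl]]] := seqlex_mid (sumle_anti (I:=I) Ha) H1 H2.
have [cy [Ec Hcy]] : exists cy, c = inr cy /\ (ca <= cy)%O.
  case: c Hl {Ey} => [l|cy] //=; case: eqP => [[E]|_] Hq; exists cy; split => //.
  by rewrite E.
subst c; move: Ea Ey; rewrite !interleaveE => Ea Ey.
have La := f_equal (@lefts _ _) Ea; have Ly := f_equal (@lefts _ _) Ey.
have Ra := f_equal (@rights _ _) Ea; have Ry := f_equal (@rights _ _) Ey.
rewrite lefts_il ?size_pth ?size_tuple // lefts_cat /= in La.
rewrite lefts_il ?size_pth ?size_tuple // !lefts_cat /= in Ly.
rewrite rights_il ?size_pth ?size_tuple // rights_cat /= in Ra.
rewrite rights_il ?size_pth ?size_tuple // !rights_cat /= in Ry.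
move: La Ly Ra Ry; rewrite /lefts /rights /= -/(lefts _) -/(rights _) => La Ly Ra Ry.
rewrite -!catA /= ?cats0 in Ly Ry La Ra.
have Hsz : size (lefts P) = (ht sqS (tag a)).-1.
  by rewrite -size_pth La size_cat addn1.
have Hszr : size (rights P) = (ht sqS (tag a)).-1.
  by rewrite -(size_tuple (tagged a)) Ra size_cat addn1.
apply/(tsqE Hp ca); split.
- have Hlt : size (lefts P) < size (pth sqS (tag y)).
    by rewrite Ly size_cat /= -addSnnS leq_addr.
  have := pred_at_sq Hr (tag y) (size (lefts P)).
  suff -> : pred_at sqS (tag y) (size (lefts P)) = tag a by [].
  have := f_equal (fun l => nth (tag a) l (size (lefts P))) Ly.
  rewrite nth_cat ltnn subnn /= (nth_map 0); last by rewrite size_iota -size_pth.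
  rewrite nth_iota ?add0n; first by [].
  by rewrite -size_pth.
- move=> i Hi; rewrite Ra Ry !nth_cat Hszr Hi //.
- by rewrite Ra Ry !nth_cat Hszr ltnn subnn.
Qed.

Lemma interleave_inj (S : finType) (sqS : rel S) d (I : finOrderType d) :
  is_forest sqS -> forall (x y : tensor sqS I), interleave x = interleave y -> x = y.
Proof.
move=> Hf [s t] [s' t']; rewrite !interleaveE /= => E.
have L := f_equal (@lefts _ _) E; have R := f_equal (@rights _ _) E.
rewrite !lefts_il ?size_pth ?size_tuple // in L.
rewrite !rights_il ?size_pth ?size_tuple // in R.
have Eh : ht sqS s = ht sqS s' by rewrite -!size_pth L.
have Es : s = s' by rewrite -(pth_last Hf s s) L Eh pth_last.
subst s'; congr existT; exact: val_inj.
Qed.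

Lemma tle_lin (S : finType) (sqS leS : rel S) d (I : finOrderType d) :
  is_forest sqS -> is_linorder leS -> is_linorder (tle leS (I:=I) (sqS:=sqS)).
Proof.
move=> Hf [[Hr Ha Ht] Htot]; split; first split.
- by move=> x; apply: seqlex_refl.
- move=> x y /andP[H1 H2]; apply: (interleave_inj Hf).
  exact: seqlex_anti (sumle_anti (I:=I) Ha) _ _ H1 H2.
- move=> y x z; apply: seqlex_trans; [exact: sumle_anti | exact: sumle_trans].
- move=> x y; rewrite /tle !interleaveE; apply: il_total => //.
  + by move=> a b /=; apply: le_total.
  + by rewrite size_pth size_tuple.
  + by rewrite size_pth size_tuple.
Qed.

Lemma tsq_forest (S : finType) (sqS : rel S) d (I : finOrderType d) :
  is_forest sqS -> is_forest (tsq (sqS:=sqS) (I:=I)).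
Proof.
move=> Hf; have [Hp Hfo] := Hf; have [Hr Ha Ht] := Hp.
have X0 : forall x : tensor sqS I, I.
  by move=> [s t]; exact: (tnth t (Ordinal (ht_gt0 Hr s))).
split; first split.
- move=> x; apply/(tsqE Hp (X0 x)); split=> //; exact: Hr.
- move=> [s t] [s' t'] /andP[]; move/(tsqE Hp (X0 (existT _ s t))) => /= [H1 E1 L1].
  move/(tsqE Hp (X0 (existT _ s t))) => /= [H2 E2 L2].
  have Es : s = s' by apply: Ha; rewrite H1 H2.
  subst s'; congr existT; apply: val_inj => /=.
  apply: (eq_from_nth (x0 := X0 (existT _ s t))); rewrite !size_tuple // => i Hi.
  have H0 := ht_gt0 Hr s.
  case: (ltnP i (ht sqS s).-1) => Hi'; first exact: E1.
  have -> : i = (ht sqS s).-1 by lia.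
  by apply: le_anti; rewrite L1 L2.
- move=> [s2 t2] [s1 t1] [s3 t3].
  set x0 := X0 (existT _ s1 t1).
  move/(tsqE Hp x0) => /= [H1 E1 L1]; move/(tsqE Hp x0) => /= [H2 E2 L2].
  apply/(tsqE Hp x0) => /=; have H12 := Ht _ _ _ H1 H2.
  have Hle := ht_le Hp H1.
  case: (ltnP (ht sqS s1) (ht sqS s2)) => Hh; last first.
    have E : s1 = s2 by apply: (ht_eq Hp H1); apply/eqP; rewrite eqn_leq Hle Hh.
    subst s2; split=> //.
      by move=> i Hi; exact: etrans (E1 i Hi) (E2 i Hi).
    exact: le_trans L1 L2.
  have H0 := ht_gt0 Hr s1.
  split=> //.
    move=> i Hi; rewrite E1 // E2 //; lia.
  by rewrite -(E2 (ht sqS s1).-1) //; lia.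
- move=> [s1 t1] [s2 t2] [s3 t3].
  set x0 := X0 (existT _ s1 t1).
  move/(tsqE Hp x0) => /= [H2 E2 L2]; move/(tsqE Hp x0) => /= [H3 E3 L3].
  wlog Hs : s2 t2 s3 t3 H2 E2 L2 H3 E3 L3 / sqS s2 s3.
    move=> W; case/orP: (Hfo _ _ _ H2 H3) => H; first exact: W.
    by rewrite orbC; apply: W.
  have Hle := ht_le Hp Hs; have H0 := ht_gt0 Hr s2.
  case: (ltnP (ht sqS s2) (ht sqS s3)) => Hh; last first.
    have E : s2 = s3 by apply: (ht_eq Hp Hs); apply/eqP; rewrite eqn_leq Hle Hh.
    subst s3.
    case/orP: (le_total (nth x0 t2 (ht sqS s2).-1) (nth x0 t3 (ht sqS s2).-1)) => Hc.
      apply/orP; left; apply/(tsqE Hp x0) => /=; split=> //.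
      by move=> i Hi; rewrite E2 // E3.
    apply/orP; right; apply/(tsqE Hp x0) => /=; split=> //.
    by move=> i Hi; rewrite E2 // E3.
  apply/orP; left; apply/(tsqE Hp x0) => /=; split=> //.
    move=> i Hi; rewrite E2 ?E3 //; lia.
  rewrite (E3 (ht sqS s2).-1) //; lia.
Qed.

Definition osib (T : Type) (r : rel T) : rel (option T) := fun a b =>
  match a, b with
  | None, _ => true
  | Some _, None => false
  | Some x, Some y => r x y
  end.

Lemma osib_ots (T : finType) (sq r : rel T) : is_linorder r ->
  ordered_tree_structure (oplus1 sq) (osib r).
Proof.
move=> [[Hr Ha Ht] Htot] u; split.
- by case=> //= x _; apply: Hr.
- by move=> [x|] [y|] //= _ _ H1 H2; congr Some; apply: Ha; rewrite H1 H2.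
- by move=> [x|] [y|] [z|] //= _ _ _; apply: Ht.
- by move=> [x|] [y|] //= _ _; apply: Htot.
Qed.

Lemma imm_succ_some (T : finType) (sq : rel T) u a :
  imm_succ (oplus1 sq) u a -> exists a', a = Some a'.
Proof. by case: a => [a'|]; [exists a' | case: u => [u|] /and3P[]]. Qed.

Lemma lexL (S : finType) (sqS leS : rel S) d (I : finOrderType d) :
  is_forest sqS -> is_linorder leS ->
  forall u a b (x y : tensor sqS I),
  imm_succ (oplus1 (tsq (I:=I))) u a -> imm_succ (oplus1 (tsq (I:=I))) u b -> a != b ->
  oplus1 (tsq (I:=I)) a (Some x) -> oplus1 (tsq (I:=I)) b (Some y) ->
  osib (tle leS (I:=I) (sqS:=sqS)) a b -> tle leS x y.
Proof.
move=> Hf Hl u a b x y Ia Ib Hne Hax Hby Hab.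
have [[Tr Ta Tt] Ttot] := @tle_lin _ _ _ _ I Hf Hl.
have [[_ Hla _] _] := Hl.
have [a' Ea] := imm_succ_some Ia; have [b' Eb] := imm_succ_some Ib; subst a b.
move: Hax Hby Hab => /= Hax Hby Hab.
case/orP: (Ttot x y) => // Hyx; exfalso.
have Hby' := tsq_tle leS Hf Hby.
have Hbx : tle leS b' x := Tt _ _ _ Hby' Hyx.
have Hab' : tsq a' b' := tsq_convex Hf Hla Hax Hab Hbx.
move: Ib => /and3P[Hub Hneb /existsP]; apply; exists (Some a').
move: Ia => /and3P[Hua Hnea _].
by rewrite Hua /= Hab' eq_sym Hnea.
Qed.

Theorem lemma4p11 (S : finType) (sqS leS : rel S)
  (d : Order.disp_t) (I : finOrderType d) :
  ordered_forest sqS leS ->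
  is_forest (@tsq S sqS d I) /\ ordered_forest (@tsq S sqS d I) (@tle S sqS leS d I).
Proof.
case=> Hf Hl _.
have Hfor := tsq_forest I Hf.
have Hlin := @tle_lin _ _ _ _ I Hf Hl.
have [[Tr Ta Tt] Ttot] := Hlin.
split=> //; split=> //.
exists (osib (tle leS (I:=I) (sqS:=sqS))); split; first exact: osib_ots.
move=> x y; rewrite /lex_le /=.
apply/idP/idP.
- move=> Hxy; case Hs: (tsq x y) => //=.
  have Hyx : ~~ tsq y x.
    apply/negP=> H; have E : x = y by apply: Ta; rewrite Hxy tsq_tle.
    by subst y; move: Hs; have [[R _ _] _] := Hfor; rewrite R.
  have Hop := oplus1_porder (Hfor.1).
  have [u [a [b /and5P[Ia Ib Hne Hax Hby]]]] :=
    G2 Hop (z0 := None) (x := Some x) (y := Some y) erefl erefl (negbT Hs) Hyx.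
  apply/existsP; exists u; apply/existsP; exists a; apply/existsP; exists b.
  rewrite Ia Ib Hne Hax Hby /=.
  have [a' Ea] := imm_succ_some Ia; have [b' Eb] := imm_succ_some Ib; subst a b.
  rewrite /=; case/orP: (Ttot a' b') => // Hba.
  have Hyx' : tle leS y x.
    by apply: (lexL Hf Hl Ib Ia); rewrite // eq_sym.
  have E : x = y by apply: Ta; rewrite Hxy Hyx'.
  by subst y; move: Hs; have [[R _ _] _] := Hfor; rewrite R.
- case/orP=> [H|/existsP[u /existsP[a /existsP[b /and5P[Ia Ib Hne Hax /andP[Hby Hab]]]]]].
    exact: tsq_tle.
  exact: (lexL Hf Hl Ia Ib Hne Hax Hby Hab).
Qed.
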